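(* For each $n\geq 1$, in $\mathbb{Z}[x_1,\dots,x_n]$ there is an equality of ideals \[ \langle h_1^n,h_2^n,\dots,h_n^n\rangle=\langle h_1^n,h_2^{n-1},h_3^{n-1},\dots,h_n^{n-1}\rangle . \]
   Context: For integers $0\leq a$ and $b\geq 1$, $h_a^b$ denotes the complete homogeneous symmetric polynomial of degree $a$ in the variables $x_1,\dots,x_b$, i.e. the sum of all monomials of degree $a$ in $x_1,\dots,x_b$. *)

(* Defs.v *)
From HB Require Import structures.
From mathcomp Require Import all_boot all_order all_algebra.
From mathcomp Require Import mpoly.
Set Implicit Arguments. Unset Strict Implicit. Unset Printing Implicit Defensive.
Import GRing.Theory.
Local Open Scope ring_scope.

(* h a b n : the complete homogeneous symmetric polynomial h_a^b of degree a
   in the first b variables x_1..x_b, viewed in {mpoly R[n]} (variables x_1..x_n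
   are 'X_0 .. 'X_(n-1)): the sum of all monomials of degree a supported on the
   first b variables. *)
Definition hcs (R : nzRingType) (n a b : nat) : {mpoly R[n]} :=
  \sum_(m : 'X_{1..n < a.+1} |
          (mdeg m == a) && [forall i : 'I_n, (b <= i)%N ==> (m i == 0%N)])
    'X_[(m : 'X_{1..n})].

Definition in_ideal (R : comNzRingType) (gs : seq R) (p : R) : Prop :=
  exists cs : seq R, size cs = size gs /\
    p = \sum_(i < size gs) cs`_i * gs`_i.

(* Main.v *)
Require Import Defs.
From HB Require Import structures.
From mathcomp Require Import all_boot all_order all_algebra.
From mathcomp Require Import mpoly.
From mathcomp Require Import zify.
Set Implicit Arguments. Unset Strict Implicit. Unset Printing Implicit Defensive.
Import GRing.Theory.
Local Open Scope ring_scope.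

Definition Phc n a b (m : 'X_{1..n}) : bool :=
  (mdeg m == a) && [forall i : 'I_n, (b <= i)%N ==> (m i == 0%N)].

Lemma mcoeff_hcs (R : nzRingType) n a b (m : 'X_{1..n}) :
  (hcs R n a b)@_m = (Phc a b m)%:R.
Proof.
rewrite /hcs raddf_sum /=.
under eq_bigr do rewrite mcoeffX.
case: (boolP (Phc a b m)) => Hm.
  have Hb : (mdeg m < a.+1)%N by move: Hm => /andP[/eqP -> _].
  rewrite (bigD1 (BMultinom Hb)) /=; last exact: Hm.
  rewrite eqxx big1 ?addr0 // => m' /andP[_ Hne].
  case: eqP => // E; exfalso; move/negP: Hne; apply; apply/eqP.
  by apply: val_inj.
rewrite big1 // => m' Hc; case: eqP => // E.
by move/negP: Hm; case; rewrite /Phc -E.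
Qed.

Lemma mcoeffXi0 (R : comNzRingType) n (i : 'I_n) (q : {mpoly R[n]}) (k : 'X_{1..n}) :
  k i = 0%N -> ('X_i * q)@_k = 0.
Proof.
move=> Hk; rewrite {1}(mpolyE q) mulr_sumr raddf_sum big1 // => m _.
rewrite -scalerAr /= mcoeffZ. rewrite -mpolyXD mcoeffX.
case: eqP => [E|]; last by rewrite mulr0.
by move: (congr1 (fun m : 'X_{1..n} => m i) E); rewrite mnmDE mnm1E eqxx Hk.
Qed.

Lemma hcs_rec (R : comNzRingType) n a b (Hb : (b < n)%N) :
  hcs R n a.+1 b.+1 = hcs R n a.+1 b + 'X_(Ordinal Hb) * hcs R n a b.+1.
Proof.
set i := Ordinal Hb.
apply/mpolyP => m; rewrite mcoeffD !mcoeff_hcs.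
case: (posnP (m i)) => Hmi.
  rewrite mcoeffXi0 // addr0; congr (_%:R); rewrite /Phc; congr (_ && _).
  apply/forallP/forallP => H j; apply/implyP => Hj; last first.
    by move/implyP: (H j); apply; exact: ltnW.
  rewrite leq_eqVlt in Hj; case/orP: Hj => [/eqP Ej|Hj]; last by move/implyP: (H j); apply.
  have -> : j = i by apply: val_inj.
  by rewrite Hmi.
have Hle : (U_(i) <= m)%MM.
  by apply/mnm_lepP => j; rewrite mnm1E; case: eqP => // <-.
rewrite -(submK Hle) addmC -commr_mpolyX mcoeffMX.
set m' := (m - U_(i))%MM.
have Ef : forall j, m j = (m' j + (i == j))%N.
  by move=> j; rewrite /m' mnmBE mnm1E; case: eqP => [<-|]; rewrite ?subn0 ?addn0 // subnK.
rewrite addmC (submK Hle) mcoeff_hcs.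
have -> : Phc a.+1 b m = false.
  apply/negbTE; rewrite /Phc negb_and; apply/orP; right.
  rewrite negb_forall; apply/existsP; exists i; rewrite negb_imply leqnn /=.
  by rewrite -lt0n.
rewrite add0r; congr (_%:R); rewrite /Phc.
have -> : mdeg m = (mdeg m').+1.
  by rewrite -(submK Hle) mdegD mdeg1 addn1.
rewrite eqSS; congr (_ && _).
apply/forallP/forallP => H j; apply/implyP => Hj; move/implyP: (H j).
  rewrite Ef; have -> : (i == j) = false.
    by apply/negbTE; apply/eqP => E; move: Hj; rewrite -E /= ltnn.
  by rewrite addn0; apply.
rewrite Ef; have -> : (i == j) = false.
  by apply/negbTE; apply/eqP => E; move: Hj; rewrite -E /= ltnn.
by rewrite addn0; apply.
Qed.

Section Ideal.
Variable R : comNzRingType.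
Implicit Types (gs hs : seq R) (p q : R).

Lemma in_ideal0 gs : in_ideal gs 0.
Proof.
exists (nseq (size gs) 0); rewrite size_nseq; split => //.
by rewrite big1 // => i _; rewrite nth_nseq if_same mul0r.
Qed.

Lemma in_idealD gs p q : in_ideal gs p -> in_ideal gs q -> in_ideal gs (p + q).
Proof.
move=> [c1 [s1 ->]] [c2 [s2 ->]].
exists (mkseq (fun i => c1`_i + c2`_i) (size gs)); rewrite size_mkseq; split => //.
rewrite -big_split /=; apply: eq_bigr => i _.
by rewrite nth_mkseq // mulrDl.
Qed.

Lemma in_idealM gs c p : in_ideal gs p -> in_ideal gs (c * p).
Proof.
move=> [c1 [s1 ->]].
exists (map (fun x => c * x) c1); rewrite size_map; split => //.
rewrite mulr_sumr; apply: eq_bigr => i _.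
by rewrite (nth_map 0) ?s1 // mulrA.
Qed.

Lemma in_ideal_gen gs g : g \in gs -> in_ideal gs g.
Proof.
move=> Hg; have Hi : (index g gs < size gs)%N by rewrite index_mem.
exists (mkseq (fun j => (j == index g gs)%:R) (size gs)); rewrite size_mkseq; split => //.
rewrite (bigD1 (Ordinal Hi)) //= big1 ?addr0.
  by rewrite nth_mkseq // eqxx mul1r nth_index.
move=> j Hj; rewrite nth_mkseq //; case: eqP => [E|]; last by rewrite mul0r.
by move/negP: Hj; case; apply/eqP; apply: val_inj.
Qed.

Lemma in_ideal_trans gs hs p :
  (forall g, g \in gs -> in_ideal hs g) -> in_ideal gs p -> in_ideal hs p.
Proof.
move=> H [cs [_ ->]].
apply: (big_ind (in_ideal hs)); [exact: in_ideal0| exact: in_idealD|].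
move=> i _; apply: in_idealM; apply: H; exact: mem_nth.
Qed.

End Ideal.

Theorem proposition4p2 (n : nat) (hn : (1 <= n)%N) (p : {mpoly int[n]}) :
  in_ideal [seq hcs int n i n | i <- iota 1 n] p <->
  in_ideal (hcs int n 1 n :: [seq hcs int n i n.-1 | i <- iota 2 n.-1]) p.
Proof.
case: n hn p => [//|n'] _ p /=.
have Hb : (n' < n'.+1)%N by [].
have Hgen2 : forall j, (j < n')%N -> hcs int n'.+1 j.+2 n' \in
    [seq hcs int n'.+1 i n' | i <- iota 2 n'].
  by move=> j Hj; apply: map_f; rewrite mem_iota; lia.
have Hup : forall k, (0 < k <= n'.+1)%N -> in_ideal
    (hcs int n'.+1 1 n'.+1 :: [seq hcs int n'.+1 i n' | i <- iota 2 n'])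
    (hcs int n'.+1 k n'.+1).
  elim => [//|[|j] IH] /andP[_ Hk2].
    by apply: in_ideal_gen; rewrite inE eqxx.
  rewrite [hcs _ _ j.+2 _](hcs_rec _ _ Hb); apply: in_idealD.
    by apply: in_ideal_gen; rewrite inE Hgen2 ?orbT //; lia.
  by apply: in_idealM; apply: IH; lia.
have Hgen1 : forall k, (0 < k <= n'.+1)%N -> hcs int n'.+1 k n'.+1 \in
    hcs int n'.+1 1 n'.+1 :: [seq hcs int n'.+1 i n'.+1 | i <- iota 2 n'].
  case => [//|[|j]] Hk; first by rewrite inE eqxx.
  by rewrite inE; apply/orP; right; apply: map_f; rewrite mem_iota; lia.
split => H; apply: (in_ideal_trans _ H) => g.
- rewrite inE => /orP[/eqP ->|]; first by apply: Hup.
  case/mapP => k; rewrite mem_iota => /andP[Hk1 Hk2] ->.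
  apply: Hup; lia.
- rewrite inE => /orP[/eqP ->|].
    by apply: in_ideal_gen; rewrite inE eqxx.
  case/mapP => k; rewrite mem_iota => /andP[Hk1 Hk2] ->.
  case: k Hk1 Hk2 => [|[|j]] // _ Hk2.
  have -> : hcs int n'.+1 j.+2 n' =
      hcs int n'.+1 j.+2 n'.+1 + (- 'X_(Ordinal Hb)) * hcs int n'.+1 j.+1 n'.+1.
    by rewrite (hcs_rec _ _ Hb) mulNr addrK.
  apply: in_idealD; last apply: in_idealM; apply: in_ideal_gen;
    apply: Hgen1; lia.
Qed.
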